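(* Let $Z=\{Z_t:t\ge 0\}$ be a (continuous) fractional Brownian motion with Hurst parameter $H\in(0,1)$, let $\alpha>0$, and put $a_t:=H\,\mathrm{e}^{\alpha t/H}/\alpha$ for $t\in\mathbf{R}$. Define $X^{(D,\alpha)}_t:=\mathrm{e}^{-\alpha t}Z_{a_t}$, $t\in\mathbf{R}$. Then the stationary process $\{X^{(D,\alpha)}_t:t\in\mathbf{R}\}$ is short range dependent for every $H\in(0,1)$, i.e. with $\rho(n):=\mathbf{E}(X^{(D,\alpha)}_iX^{(D,\alpha)}_{i+n})$ (independent of $i$) the limit $\lim_{k\to\infty}\sum_{n=0}^k\rho(n)$ exists.
   Context: A fractional Brownian motion (FBM) with Hurst parameter $H\in(0,1)$ is a centered Gaussian process $Z=\{Z_t:t\ge0\}$ with covariance $\mathbf{E}(Z_tZ_s)=\frac12(t^{2H}+s^{2H}-|t-s|^{2H})$; a continuous version is taken. A stationary second order mean-zero sequence $X=\{X_n\}$ with $\rho_X(n)=\mathbf{E}(X_iX_{i+n})$ is called short range dependent if $\lim_{k\to\infty}\sum_{n=0}^k\rho_X(n)$ exists. *)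

(* Defs.v *)
From HB Require Import structures.
From mathcomp Require Import all_boot all_order all_algebra.
From mathcomp Require Import all_classical all_reals all_analysis.
Set Implicit Arguments. Unset Strict Implicit. Unset Printing Implicit Defensive.
Import Order.TTheory GRing.Theory Num.Theory.
Import numFieldNormedType.Exports.
Local Open Scope classical_set_scope.
Local Open Scope ring_scope.

Definition centered_gaussian (d : measure_display) (T : measurableType d)
  (R : realType) (P : probability T R) (Y : T -> R) : Prop :=
  exists s : R, 0 <= s /\
    (if s == 0 then P [set w | Y w != 0] = 0%E
     else forall A : set R, measurable A ->
            P (Y @^-1` A) = normal_prob 0 s A).

(* Z (only its values at t >= 0 matter) is a continuous fractional Brownian
   motion with Hurst parameter H: a centered Gaussian process (every finite
   linear combination of its marginals is centered Gaussian) with covariance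
   E(Z_t Z_s) = (t^{2H} + s^{2H} - |t - s|^{2H}) / 2, all of whose paths are
   continuous on [0, +oo). *)
Definition is_fbm (d : measure_display) (T : measurableType d)
  (R : realType) (P : probability T R) (H : R) (Z : R -> T -> R) : Prop :=
  [/\ forall t, 0 <= t -> measurable_fun setT (Z t),
      forall (n : nat) (t c : 'I_n -> R), (forall i, 0 <= t i) ->
        centered_gaussian P (fun w => \sum_(i < n) c i * Z (t i) w),
      forall t s, 0 <= t -> 0 <= s ->
        ('E_P[fun w => (Z t w * Z s w)%R] =
          ((t `^ (2 * H) + s `^ (2 * H) - `|t - s| `^ (2 * H)) / 2)%:E)%E
    & forall w, {within `[0, +oo[, continuous (fun t => Z t w)}].

Definition lamperti_time (R : realType) (H alpha t : R) : R :=
  H * expR (alpha * t / H) / alpha.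

Definition XD (d : measure_display) (T : measurableType d) (R : realType)
  (H alpha : R) (Z : R -> T -> R) (t : R) : T -> R :=
  fun w => expR (- (alpha * t)) * Z (lamperti_time H alpha t) w.

Definition short_range_dependent (d : measure_display) (T : measurableType d)
  (R : realType) (P : probability T R) (X : int -> T -> R) : Prop :=
  (forall i, X i \in Lfun P 2) /\
  (forall i, ('E_P[X i] = 0)%E) /\
  exists rho : nat -> R,
    (forall (i : int) (n : nat), ('E_P[fun w => (X i w * X (i + n%:Z)%R w)%R] = (rho n)%:E)%E) /\
    cvgn (fun k : nat => \sum_(0 <= n < k.+1) rho n).

(* Main.v *)
Require Import Defs.
From HB Require Import structures.
From mathcomp Require Import all_boot all_order all_algebra.
From mathcomp Require Import all_classical all_reals all_analysis.
From mathcomp Require Import ring lra measurable_realfun.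
Import Order.TTheory GRing.Theory Num.Theory.
Import numFieldNormedType.Exports.
Local Open Scope classical_set_scope.
Local Open Scope ring_scope.

Section P4.
Variable R : realType.

Lemma powR_bnds (b p : R) : 0 <= b <= 1 -> 0 < p <= 2 -> b ^+ 2 <= b `^ p <= 1.
Proof.
move=> /andP[b0 b1] /andP[p0 p2].
have [->|bn0] := eqVneq b 0.
  by rewrite powR0 ?gt_eqF// expr0n /= lexx ler01.
have bb : 0 < b <= 1 by rewrite lt_neqAle eq_sym bn0 b0 b1.
apply/andP; split.
  rewrite -powR_mulrn//; exact: ger_powR.
by rewrite -(powRr0 b); apply: ger_powR => //; exact: ltW.
Qed.

Definition rhoF (H a : R) (n : nat) : R :=
  (H / a) `^ (2 * H) / 2 *
  (expR (- (a * n%:R)) + expR (a * n%:R)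
   - expR (- (a * n%:R)) * (expR (a * n%:R / H) - 1) `^ (2 * H)).

Lemma rhoF_alt (H a : R) n : 0 < H -> 0 <= a ->
  rhoF H a n = (H / a) `^ (2 * H) / 2 *
  (expR (- (a * n%:R)) + expR (a * n%:R) *
     (1 - (1 - expR (- (a * n%:R / H))) `^ (2 * H))).
Proof.
move=> H0 a0; rewrite /rhoF; congr (_ * _).
have -> : expR (a * n%:R / H) - 1 = expR (a * n%:R / H) * (1 - expR (- (a * n%:R / H))).
  by rewrite mulrBr mulr1 expRxMexpNx_1.
have e1 : 0 <= 1 - expR (- (a * n%:R / H)).
  by rewrite subr_ge0 expR_le1 oppr_le0 -mulrA mulr_ge0 ?divr_ge0 ?ler0n // ltW.
rewrite powRM ?expR_ge0// -expRM.
have -> : a * n%:R / H * (2 * H) = a * n%:R + a * n%:R.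
  by field; rewrite gt_eqF.
rewrite expRD mulrA mulrA -expRD addNr expR0 mul1r.
set E := expR (a * n%:R); set B := _ `^ _.
by ring.
Qed.

Lemma rhoF_cvg (H a : R) : 0 < H -> H < 1 -> 0 < a ->
  cvgn (fun k : nat => \sum_(0 <= n < k.+1) rhoF H a n).
Proof.
move=> H0 H1 a0.
set K := (H / a) `^ (2 * H) / 2.
have K0 : 0 <= K by rewrite divr_ge0 ?powR_ge0.
have pb : 0 < 2 * H <= 2.
  by apply/andP; split; lra.
have key n : 0 <= rhoF H a n <= geometric K (expR (- a)) n
   + geometric (2 * K) (expR (a - a / H)) n.
  rewrite rhoF_alt //; last exact: ltW.
  rewrite -/K /=.
  set x := expR (- (a * n%:R / H)).
  have x0 : 0 <= x by apply: expR_ge0.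
  have x1 : x <= 1.
    by rewrite /x expR_le1 oppr_le0 divr_ge0 ?mulr_ge0 ?ler0n // ltW.
  have /andP[Bl Bu] := @powR_bnds (1 - x) (2 * H)
     (ltac:(apply/andP; split; rewrite ?subr_ge0 ?lerBlDr ?lerDl //)) pb.
  set B := _ `^ _ in Bl Bu *.
  set E := expR (a * n%:R).
  have E0 : 0 <= E by apply: expR_ge0.
  have EX : E * x = expR (a - a / H) ^+ n.
    by rewrite -expRM_natl /E /x -expRD; congr expR; ring.
  have e1 : expR (- (a * n%:R)) = expR (- a) ^+ n.
    by rewrite -expRM_natl; congr expR; ring.
  apply/andP; split.
    apply: mulr_ge0 => //; apply: addr_ge0; first exact: expR_ge0.
    by apply: mulr_ge0 => //; rewrite subr_ge0.
  rewrite e1 mulrDr -mulrA; apply: lerD => //.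
  rewrite -EX.
  have h : E * (1 - B) <= E * (2 * x).
    by apply: ler_wpM2l => //; nra.
  rewrite /K; set Q := _ `^ _.
  have Q0 : 0 <= Q by apply: powR_ge0.
  nra.
have cs : cvgn (series (rhoF H a)).
  apply: (@series_le_cvg _ _ (geometric K (expR (- a)) + geometric (2 * K) (expR (a - a / H)))).
  - by move=> n; have /andP[] := key n.
  - by move=> n; have /andP[h1 h2] := key n; apply: le_trans h2.
  - by move=> n; have /andP[] := key n.
  apply: is_cvg_seriesD; apply: is_cvg_geometric_series;
    rewrite ger0_norm ?expR_ge0 // expR_lt1.
    by rewrite oppr_lt0.
  rewrite subr_lt0 ltr_pdivlMr //; nra.
apply: (cvgP (limn (series (rhoF H a)))).
have := cvg_shiftS (series (rhoF H a)) (nbhs (limn (series (rhoF H a)))).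
move=> ->; exact: cs.
Qed.

Definition lt_ (H a t : R) := H * expR (a * t / H) / a.

Lemma lt_pow (H a t : R) : 0 < H -> 0 < a ->
  lt_ H a t `^ (2 * H) = (H / a) `^ (2 * H) * (expR (a * t) * expR (a * t)).
Proof.
move=> H0 a0; rewrite /lt_ mulrAC (@powRM _ (H / a) (expR _)) ?divr_ge0 ?expR_ge0 ?ltW //.
by rewrite -expRM -expRD; congr (_ * expR _); field; rewrite gt_eqF.
Qed.

Lemma cov_alg (H a x : R) (n : nat) : 0 < H -> 0 < a ->
  expR (- (a * x)) * expR (- (a * (x + n%:R))) *
  ((lt_ H a x `^ (2 * H) + lt_ H a (x + n%:R) `^ (2 * H)
    - `|lt_ H a x - lt_ H a (x + n%:R)| `^ (2 * H)) / 2) = rhoF H a n.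
Proof.
move=> H0 a0.
have dif : `|lt_ H a x - lt_ H a (x + n%:R)| =
   H / a * expR (a * x / H) * (expR (a * n%:R / H) - 1).
  rewrite distrC ger0_norm.
    by rewrite /lt_ mulrDr mulrDl expRD; field; exact: lt0r_neq0.
  rewrite subr_ge0 /lt_.
  have e : expR (a * x / H) <= expR (a * (x + n%:R) / H).
    rewrite ler_expR ler_pM2r ?invr_gt0 // ler_pM2l // lerDl; exact: ler0n.
  by apply: ler_wpM2r; [rewrite invr_ge0 ltW | apply: ler_wpM2l => //; apply: ltW].
rewrite dif (lt_pow H a x H0 a0) (lt_pow H a (x + n%:R) H0 a0).
have ge : 0 <= expR (a * n%:R / H) - 1.
  rewrite subr_ge0 -[X in X <= _]expR0 ler_expR; apply: divr_ge0; last exact: ltW.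
  by apply: mulr_ge0; [exact: ltW | exact: ler0n].
have Ha : 0 <= H / a by rewrite divr_ge0 // ltW.
rewrite [X in _ - X]powRM ?mulr_ge0 ?expR_ge0 //.
rewrite [X in _ - X * _]powRM ?expR_ge0 //.
rewrite -expRM (_ : a * x / H * (2 * H) = a * x + a * x); last first.
  by field; exact: lt0r_neq0.
rewrite /rhoF; set C := (H / a) `^ (2 * H); set D := (_ - 1) `^ (2 * H).
rewrite !expRN mulrDr !expRD.
have e1 := expR_gt0 (a * x); have e2 := expR_gt0 (a * n%:R).
field; first by rewrite !lt0r_neq0.
- exact: ltW.
- by rewrite invr_ge0 ltW.
Qed.
End P4.

Section normal_sym.
Variable R : realType.

Lemma normal_pdf_even (s x : R) : s != 0 -> normal_pdf 0 s (- x) = normal_pdf 0 s x.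
Proof. by move=> s0; rewrite /normal_pdf (negbTE s0) /normal_fun !subr0 sqrrN. Qed.

Lemma normal_S1 (s r : R) : s != 0 ->
  normal_prob 0 s `]-oo, r] = normal_prob 0 s `[(- r), +oo[.
Proof.
move=> s0; rewrite /normal_prob -[in LHS](opprK r) ge0_integration_by_substitutionNy.
- by apply: eq_integral => x _; rewrite /= normal_pdf_even.
- apply: continuous_subspaceT; exact: continuous_normal_pdf.
- by move=> x _; exact: normal_pdf_ge0.
Qed.


Lemma normal_S2 (s r : R) : s != 0 ->
  normal_prob 0 s `]-oo, (- r)[ = normal_prob 0 s `]r, +oo[.
Proof.
move=> s0; rewrite /normal_prob integral_itv_bndo_bndc; last by apply/measurable_EFinP; apply: measurable_funTS; exact: measurable_normal_pdf.
rewrite integral_itv_obnd_cbnd; last by apply/measurable_EFinP; apply: measurable_funTS; exact: measurable_normal_pdf.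
by have := @normal_S1 s (- r) s0; rewrite opprK.
Qed.
End normal_sym.

Section gauss_mean.
Context d (T : measurableType d) (R : realType) (P : probability T R).

Lemma gauss_mean0 (Y : T -> R) : measurable_fun setT Y -> Y \in Lfun P 1 ->
  centered_gaussian P Y -> ('E_P[Y] = 0)%E.
Proof.
move=> mY L1 [s [s0 hs]].
have [sE|sn0] := eqVneq s 0.
  rewrite sE eqxx in hs.
  rewrite unlock.
  rewrite (@ae_eq_integral _ _ _ P setT (cst 0%E) (EFin \o Y)) //.
  - by rewrite integral0.
  - exact/measurable_EFinP.
  - exists [set w | Y w != 0]; split => //.
      rewrite (_ : [set w | Y w != 0] = Y @^-1` (~` [set 0])).
        by rewrite -[_ @^-1` _]setTI; apply: mY => //; apply: measurableC.
      by apply/seteqP; split => w /=; move/eqP.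
    move=> w /= h; apply/eqP => Y0; apply: h => _; by rewrite Y0.
rewrite (negbTE sn0) in hs.
have mNY : measurable_fun setT (\- Y) by apply: measurableT_comp => //.
have L1N : (\- Y) \in Lfun P 1 by rewrite rpredN.
pose Y' : {RV P >-> R} := mfun_Sub (mem_set mY : Y \in mfun).
pose NY' : {RV P >-> R} := mfun_Sub (mem_set mNY : (\- Y) \in mfun).
have EY := @expectation_cdf_ccdf _ _ _ P Y' L1.
have ENY := @expectation_cdf_ccdf _ _ _ P NY' L1N.
have Hc : ccdf NY' = ccdf Y'.
  apply/funext => r; rewrite /ccdf /distribution /pushforward /=.
  rewrite (_ : (\- Y) @^-1` `]r, +oo[ = Y @^-1` `]-oo, (- r)[).
    by rewrite !hs // normal_S2.
  by apply/seteqP; split => w /=; rewrite !in_itv /= andbT ltrNr.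
have Hd : cdf NY' = cdf Y'.
  apply/funext => r; rewrite /cdf /distribution /pushforward /=.
  rewrite (_ : (\- Y) @^-1` `]-oo, r] = Y @^-1` `[(- r), +oo[).
    by rewrite !hs // normal_S1.
  by apply/seteqP; split => w /=; rewrite !in_itv /= andbT lerNl.
rewrite Hc Hd -EY in ENY.
change ('E_P[\- Y] = 'E_P[Y])%E in ENY.
have eN : (\- Y) = (-1) \o* Y.
  by apply/funext => w; rewrite /GRing.mulr_fun /= mulrN1.
move: ENY; rewrite eN expectationZl //.
have := expectation_fin_num L1.
move: ('E_P[Y])%E => [x| |] //= _.
rewrite -EFinM => /eqP; rewrite eqe => /eqP h.
by congr EFin; lra.
Qed.
End gauss_mean.

Section main.
Context d (T : measurableType d) (R : realType) (P : probability T R).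

Lemma fbm_L2 (H : R) (Z : R -> T -> R) (t : R) : is_fbm P H Z -> 0 <= t ->
  Z t \in Lfun P 2%:E.
Proof.
move=> [mZ gZ cZ _] t0.
rewrite inE; apply/andP; split; first by rewrite inE /=; exact: mZ.
rewrite inE /= /finite_norm unlock /Lnorm.
apply: poweR_lty.
have := cZ t t t0 t0; rewrite unlock => h.
under eq_integral => w _ do rewrite abse_EFin poweR_EFin powR_mulrn // -normrX ger0_norm ?sqr_ge0 // expr2.
by rewrite h ltry.
Qed.

End main.

Theorem proposition3p1 (d : measure_display) (T : measurableType d)
  (R : realType) (P : probability T R) (H alpha : R) (Z : R -> T -> R) :
  0 < H -> H < 1 -> 0 < alpha -> is_fbm P H Z ->
  short_range_dependent P (fun i : int => XD H alpha Z (i%:~R)).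
Proof.
move=> H0 H1 a0 fbm.
have [mZ gZ cZ _] := fbm.
have ltpos t : 0 <= lamperti_time H alpha t.
  rewrite /lamperti_time; apply: divr_ge0; last exact: ltW.
  by apply: mulr_ge0; [exact: ltW | exact: expR_ge0].
have XDE t : XD H alpha Z t = (expR (- (alpha * t))) \o* Z (lamperti_time H alpha t).
  by apply/funext => w; rewrite /XD /GRing.mulr_fun /=; exact: mulrC.
have L2Z t : Z (lamperti_time H alpha t) \in Lfun P 2%:E.
  by apply: fbm_L2; [exact: fbm | exact: ltpos].
have L2 t : XD H alpha Z t \in Lfun P 2%:E.
  by rewrite XDE; apply: Lfun_scale => //; rewrite ler1n.
have L1Z t : Z (lamperti_time H alpha t) \in Lfun P 1.
  by apply: (Lfun_subset12 _ (L2Z t)); apply: fin_num_measure.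
have mean t : ('E_P[Z (lamperti_time H alpha t)] = 0)%E.
  apply: gauss_mean0 => //; first exact: mZ.
  have G := gZ 1%N (fun=> lamperti_time H alpha t) (fun=> 1) (fun=> ltpos t).
  rewrite (_ : (fun w => _) = Z (lamperti_time H alpha t)) in G => //.
  by apply/funext => w; rewrite big_ord1 mul1r.
split; first by move=> i; exact: L2.
split.
  by move=> i; rewrite XDE expectationZl // mean mule0.
exists (@rhoF R H alpha); split; last exact: rhoF_cvg.
move=> i n; rewrite intrD.
set x := i%:~R.
change ((n%:Z)%:~R : R) with (n%:R : R).
rewrite (_ : (fun w => _) = (expR (- (alpha * x)) * expR (- (alpha * (x + n%:R))))
    \o* (Z (lamperti_time H alpha x) \* Z (lamperti_time H alpha (x + n%:R)))); last first.
  by apply/funext => w; rewrite /XD /GRing.mulr_fun /=; ring.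
rewrite expectationZl; last exact: Lfun2_mul_Lfun1.
rewrite cZ // -EFinM; congr EFin.
exact: cov_alg.
Qed.
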